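(* Let $H$ be a hypergraph and let $Y \subseteq \bigcup H$ be dispensable in $H$. Then for every $Z\subseteq \bigcup H$: $Z$ is dispensable in $H$ if and only if $Z$ is dispensable in $H\cup\{Y\}$.
   Context: A hypergraph is a finite set $H$ of nonempty subsets of some finite set; its carrier is $\bigcup H$ (the union of its members), and $H$ is called a hypergraph on $\bigcup H$. The empty family $\emptyset$ is the empty hypergraph. For a family $F$ of sets and a set $Y$, let $F_Y=\{X\in F\mid X\subseteq Y\}$. A hypergraph partition of a hypergraph $H$ is a partition $\{H_1,\dots,H_n\}$ ($n\ge 0$, blocks nonempty) of the set $H$ such that $\{\bigcup H_1,\dots,\bigcup H_n\}$ is a partition of $\bigcup H$. A hypergraph is connected if it has exactly one hypergraph partition (for nonempty $H$: the graph whose vertices are the members of $H$, two being adjacent when they intersect, is connected). A subset $Y$ of $\bigcup H$ is dispensable in $H$ when $H_Y\setminus\{Y\}$ is a connected hypergraph whose carrier is exactly $Y$. *)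

(* Defs.v *)
From mathcomp Require Import all_boot.
Set Implicit Arguments. Unset Strict Implicit. Unset Printing Implicit Defensive.

Definition hypergraph (T : finType) (H : {set {set T}}) : Prop := set0 \notin H.

Definition carrier (T : finType) (H : {set {set T}}) : {set T} := cover H.

Definition restr (T : finType) (F : {set {set T}}) (Y : {set T}) : {set {set T}} :=
  [set X in F | X \subset Y].

(* A hypergraph partition of H: a partition P of the set H (nonempty blocks)
   such that the family of unions of the blocks (indexed by P) is a partition
   of the carrier of H. *)
Definition hyp_partition (T : finType) (H : {set {set T}})
    (P : {set {set {set T}}}) : Prop :=
  partition P H /\
  {in P &, injective (fun B => cover B)} /\
  partition [set cover B | B in P] (cover H).

Definition connected (T : finType) (H : {set {set T}}) : Prop :=
  exists P, hyp_partition H P /\ forall Q, hyp_partition H Q -> Q = P.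

Definition dispensable (T : finType) (H : {set {set T}}) (Y : {set T}) : Prop :=
  Y \subset carrier H /\
  connected (restr H Y :\ Y) /\ carrier (restr H Y :\ Y) = Y.

(* Main.v *)
Require Import Defs.
From mathcomp Require Import all_boot.
Set Implicit Arguments. Unset Strict Implicit. Unset Printing Implicit Defensive.

Lemma cv_set2 (U : finType) (A B : {set U}) : cover [set A; B] = A :|: B.
Proof.
apply/setP=> x; apply/bigcupP/setUP => [[W] | [xA|xB]].
- by rewrite !inE => /orP[]/eqP->; [left|right].
- by exists A; rewrite ?inE ?eqxx.
- by exists B; rewrite ?inE ?eqxx ?orbT.
Qed.

Lemma cv_set0 (U : finType) : cover (set0 : {set {set U}}) = set0.
Proof. by rewrite /cover big_set0. Qed.

Section S.
Variable T : finType.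
Implicit Types (F G L : {set {set T}}) (X W : {set T}).

Lemma cvP x F : reflect (exists2 W, W \in F & x \in W) (x \in cover F).
Proof. by apply: (iffP bigcupP). Qed.

Lemma cv_in x W F : W \in F -> x \in W -> x \in cover F.
Proof. by move=> WF xW; apply/cvP; exists W. Qed.

Lemma cvS F G : G \subset F -> cover G \subset cover F.
Proof.
move=> /subsetP sGF; apply/subsetP=> x /cvP[W WG xW]; exact: (cv_in (sGF _ WG)).
Qed.

Lemma cv0P F : cover F = set0 <-> forall x, x \notin cover F.
Proof.
split=> [-> x|h]; first by rewrite inE.
by apply/setP=> x; rewrite inE; apply/negbTE.
Qed.

Lemma cvS0 F G : G \subset F -> cover F = set0 -> cover G = set0.
Proof.
move=> s /cv0P h; apply/cv0P=> x; apply/negP=> xG.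
by move: (h x); rewrite (subsetP (cvS s) _ xG).
Qed.

Definition sep F := forall G, G \subset F ->
  (forall x, x \in cover G -> x \in cover (F :\: G) -> False) ->
  cover G = set0 \/ cover (F :\: G) = set0.

Lemma sep_add F X : X \subset cover F -> sep F -> sep (X |: F).
Proof.
move=> XF sF.
case XinF: (X \in F).
  by have -> : X |: F = F by apply/setUidPr; rewrite sub1set.
move=> G sG hd.
have sG0 : G :\ X \subset F.
  apply/subsetP=> W /setD1P[WX WG]; move: (subsetP sG _ WG) => /setU1P[]//.
  by move=> e; rewrite e eqxx in WX.
have hd0 : forall x, x \in cover (G :\ X) -> x \in cover (F :\: (G :\ X)) -> False.
  move=> x /cvP[W /setD1P[WX WG] xW] /cvP[W' /setDP[W'F W'n] xW'].
  apply: (hd x); first exact: (cv_in WG).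
  apply: (cv_in (W := W')) => //; rewrite !inE W'F orbT andbT.
  by apply: contra W'n => W'G; rewrite !inE W'G andbT; apply/eqP=> e; move: XinF; rewrite -e W'F.
have [c|c] := sF _ sG0 hd0.
- left; apply/cv0P=> x; apply/negP=> /cvP[W WG xW].
  case: (eqVneq W X) => [e|ne].
  + subst W. move/subsetP: XF => /(_ _ xW) /cvP[W' W'F xW'].
    case W'G: (W' \in G).
    * move/cv0P: c => /(_ x); rewrite (cv_in (W:=W')) //.
      by rewrite !inE W'G andbT; apply/eqP=> e; move: XinF; rewrite -e W'F.
    * apply: (hd x); first exact: (cv_in WG).
      by apply: (cv_in (W:=W')) => //; rewrite !inE W'F W'G orbT.
  + move/cv0P: c => /(_ x); rewrite (cv_in (W:=W)) //.
    by rewrite !inE ne.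
- right; apply/cv0P=> x; apply/negP=> /cvP[W /setDP[WXF WnG] xW].
  case/setU1P: WXF => [e|WF].
  + subst W.
    have xG : x \in cover G.
      move/subsetP: XF => /(_ _ xW) /cvP[W' W'F xW'].
      case W'G: (W' \in G); first exact: (cv_in W'G).
      move/cv0P: c => /(_ x); rewrite (cv_in (W:=W')) //.
      rewrite !inE W'F andbT; apply/negP=> /andP[_ W'G']; by rewrite W'G' in W'G.
    apply: (hd x xG); apply: (cv_in (W:=X)) => //; by rewrite !inE eqxx /= andbT.
  + move/cv0P: c => /(_ x); rewrite (cv_in (W:=W)) //.
    rewrite !inE WF andbT; apply/negP=> /andP[_ WG]; by rewrite WG in WnG.
Qed.

Lemma sep_del F L X : X \notin F -> L \subset F -> cover L = X -> sep L ->
  sep (X |: F) -> sep F.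
Proof.
move=> XnF sLF cL sL sXF G sGF hd.
have sLG : L :&: G \subset L by apply: subsetIl.
have hdL : forall x, x \in cover (L :&: G) -> x \in cover (L :\: (L :&: G)) -> False.
  move=> x /cvP[W /setIP[WL WG] xW] /cvP[W' /setDP[W'L W'n] xW'].
  apply: (hd x); first exact: (cv_in WG).
  apply: (cv_in (W:=W')) => //; rewrite !inE (subsetP sLF _ W'L) andbT.
  by apply: contra W'n => W'G; rewrite !inE W'L W'G.
have [c|c] := sL _ sLG hdL.
- have XFG : X \subset cover (F :\: G).
    apply/subsetP=> x; rewrite -cL => /cvP[W WL xW].
    case WG: (W \in G).
      by move/cv0P: c => /(_ x); rewrite (cv_in (W:=W)) // !inE WL WG.
    by apply: (cv_in (W:=W)) => //; rewrite !inE WG (subsetP sLF _ WL).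
  have sG' : G \subset X |: F by apply: (subset_trans sGF); apply: subsetUr.
  have hd' : forall x, x \in cover G -> x \in cover ((X |: F) :\: G) -> False.
    move=> x xG /cvP[W /setDP[/setU1P[e|WF] WnG] xW].
    + subst W; exact: (hd x xG (subsetP XFG _ xW)).
    + by apply: (hd x xG); apply: (cv_in (W:=W)) => //; rewrite !inE WF WnG.
  have [c'|c'] := sXF _ sG' hd'; first by left.
  right; apply: (cvS0 _ c'); apply/subsetP=> W; rewrite !inE => /andP[-> ->].
  by rewrite orbT.
- have XG : X \subset cover G.
    apply/subsetP=> x; rewrite -cL => /cvP[W WL xW].
    case WG: (W \in G); first exact: (cv_in WG).
    move/cv0P: c => /(_ x); rewrite (cv_in (W:=W)) // !inE WL WG //.
  have sG' : X |: G \subset X |: F by apply: setUS.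
  have hd' : forall x, x \in cover (X |: G) -> x \in cover ((X |: F) :\: (X |: G)) -> False.
    move=> x xXG /cvP[W' /setDP[W'XF W'n] xW'].
    have xG : x \in cover G.
      case/cvP: xXG => W /setU1P[e|WG] xW; last exact: (cv_in WG).
      by subst W; apply: (subsetP XG).
    apply: (hd x xG); apply: (cv_in (W:=W')) => //.
    case/setU1P: W'XF => [e|W'F]; first by subst W'; rewrite !inE eqxx in W'n.
    by rewrite !inE W'F andbT; apply: contra W'n => W'G; rewrite !inE W'G orbT.
  have [c'|c'] := sXF _ sG' hd'.
  + by left; apply: (cvS0 _ c'); apply: subsetUr.
  + right; apply: (cvS0 _ c'); apply/subsetP=> W; rewrite !inE => /andP[WnG WF].
    have WX : (W == X) = false by apply/eqP=> e; move: XnF; rewrite -e WF.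
    by rewrite WX WF orbT andbT.
Qed.

Lemma hp1 F : F != set0 -> cover F != set0 -> hyp_partition F [set F].
Proof.
move=> F0 cF0; split; [|split].
- by rewrite /partition cover1 eqxx trivIset1 inE eq_sym F0.
- by move=> A B; rewrite !inE => /eqP-> /eqP->.
- by rewrite imset_set1 /partition cover1 eqxx trivIset1 inE eq_sym cF0.
Qed.

Lemma hp2 F G : G \subset F -> cover G != set0 -> cover (F :\: G) != set0 ->
  cover G :&: cover (F :\: G) = set0 -> hyp_partition F [set G; F :\: G].
Proof.
move=> sGF c1 c2 dis.
have G0 : G != set0 by apply: contraNneq c1 => ->; apply/eqP/cv0P=> x; apply/negP=> /cvP[W]; rewrite inE.
have D0 : F :\: G != set0 by apply: contraNneq c2 => ->; apply/eqP/cv0P=> x; apply/negP=> /cvP[W]; rewrite inE.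
have neq : cover G != cover (F :\: G).
  apply: contraNneq c1 => e; apply/eqP; by rewrite -e setIid in dis.
have GD : G :|: (F :\: G) = F.
  by apply/setP=> W; rewrite !inE; case WG: (W \in G) => //=; rewrite (subsetP sGF _ WG).
have cvGD : cover G :|: cover (F :\: G) = cover F.
  apply/setP=> x; apply/idP/idP.
  - case/setUP=> /cvP[W WG xW].
    + by apply: (cv_in (W:=W)) => //; rewrite (subsetP sGF).
    + by apply: (cv_in (W:=W)) => //; move: WG; rewrite !inE => /andP[].
  - case/cvP=> W WF xW; apply/setUP.
    case WG: (W \in G); [left|right]; apply: (cv_in (W:=W)) => //.
    by rewrite !inE WG.
have im : [set cover B | B in [set G; F :\: G]] = [set cover G; cover (F :\: G)].
  apply/setP=> Z; apply/imsetP/idP => [[B]|].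
  - by rewrite !inE => /orP[]/eqP-> ->; rewrite eqxx ?orbT.
  - by rewrite !inE => /orP[]/eqP->; [exists G|exists (F :\: G)]; rewrite ?inE ?eqxx ?orbT.
split; [|split].
- apply/and3P; split.
  + by rewrite cv_set2 GD.
  + apply/trivIsetP=> A B; rewrite !inE => /orP[]/eqP-> /orP[]/eqP->; rewrite ?eqxx //= => _.
    * by rewrite -setI_eq0; apply/eqP/setP=> W; rewrite !inE; case: (W \in G); rewrite ?andbF.
    * by rewrite -setI_eq0; apply/eqP/setP=> W; rewrite !inE; case: (W \in G); rewrite ?andbF.
  + by rewrite !inE !negb_or eq_sym G0 eq_sym D0.
- move=> A B; rewrite !inE => /orP[]/eqP-> /orP[]/eqP-> //= e.
  + by rewrite e eqxx in neq.
  + by rewrite e eqxx in neq.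
- rewrite im; apply/and3P; split.
  + by rewrite cv_set2 cvGD.
  + apply/trivIsetP=> A B; rewrite !inE => /orP[]/eqP-> /orP[]/eqP->; rewrite ?eqxx //= => _.
    * by rewrite -setI_eq0 dis.
    * by rewrite -setI_eq0 setIC dis.
  + by rewrite !inE !negb_or eq_sym c1 eq_sym c2.
Qed.


Lemma conn_sep F : connected F -> sep F.
Proof.
move=> [P [hP uP]] G sGF hd.
case: (eqVneq (cover G) set0) => [->|c1]; first by left.
case: (eqVneq (cover (F :\: G)) set0) => [->|c2]; first by right.
exfalso.
have dis : cover G :&: cover (F :\: G) = set0.
  apply/setP=> x; rewrite !inE; apply/negP=> /andP[a b]; exact: (hd x a b).
have cF0 : cover F != set0.
  apply: contraNneq c1 => e; apply/eqP; apply: (cvS0 sGF e).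
have F0 : F != set0 by apply: contraNneq cF0 => ->; rewrite cv_set0.
have e1 := uP _ (hp2 sGF c1 c2 dis).
have e2 := uP _ (hp1 F0 cF0).
have : G \in [set F] by rewrite e2 -e1 !inE eqxx.
have : F :\: G \in [set F] by rewrite e2 -e1 !inE eqxx orbT.
rewrite !inE => /eqP e3 /eqP e4.
by move: F0; rewrite -e3 e4 setDv eqxx.
Qed.

Lemma sep_conn F : F != set0 -> cover F != set0 -> sep F -> connected F.
Proof.
move=> F0 cF0 sF; exists [set F]; split; first exact: hp1.
move=> Q [/and3P[/eqP cQ tQ nQ] [inj /and3P[_ tI nI]]].
have [Q0|[B BQ]] := set_0Vmem Q.
  by move: F0; rewrite -cQ Q0 cv_set0 eqxx.
have inQ : forall W, W \in F -> exists2 B', B' \in Q & W \in B'.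
  by move=> W; rewrite -cQ => /bigcupP.
have sub : forall B', B' \in Q -> B' \subset F.
  by move=> B' B'Q; apply/subsetP=> W WB; rewrite -cQ; apply/bigcupP; exists B'.
have disj : forall B', B' \in Q -> B' != B -> forall x, x \in cover B -> x \in cover B' -> False.
  move=> B' B'Q ne x xB xB'.
  have ne' : cover B != cover B'.
    by apply: contra ne => /eqP e; rewrite (inj _ _ B'Q BQ) // e.
  move/trivIsetP: tI => /(_ _ _ (imset_f _ BQ) (imset_f _ B'Q) ne') d.
  by rewrite (disjointFr d xB) in xB'.
have hd : forall x, x \in cover B -> x \in cover (F :\: B) -> False.
  move=> x xB /cvP[W /setDP[WF WnB] xW].
  have [B' B'Q WB'] := inQ W WF.
  apply: (disj B' B'Q _ x xB (cv_in WB' xW)).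
  by apply: contraNneq WnB => <-.
have cB : cover B != set0.
  by apply: contraNneq nI => <-; apply: imset_f.
have [c|c] := sF _ (sub _ BQ) hd; first by rewrite c eqxx in cB.
have allB : forall B', B' \in Q -> B' = B.
  move=> B' B'Q; apply/eqP; apply/negPn/negP=> ne.
  have cB' : cover B' != set0.
    by apply: contraNneq nI => <-; apply: imset_f.
  have [|[x /cvP[W WB' xW]]] := set_0Vmem (cover B'); first by move/eqP; rewrite (negbTE cB').
  move/cv0P: c => /(_ x); rewrite (cv_in (W:=W)) //.
  rewrite !inE (subsetP (sub _ B'Q) _ WB') andbT.
  move/trivIsetP: tQ => /(_ _ _ B'Q BQ ne) d.
  by rewrite (disjointFr d WB').
have BF : B = F.
  apply/eqP; rewrite eqEsubset (sub _ BQ) /=; apply/subsetP=> W WF.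
  by have [B' B'Q WB'] := inQ W WF; rewrite -(allB _ B'Q).
apply/setP=> B'; rewrite inE; apply/idP/eqP=> [B'Q|->]; first by rewrite (allB _ B'Q).
by rewrite -BF.
Qed.

Lemma cv_U1 X F : cover (X |: F) = X :|: cover F.
Proof.
apply/setP=> x; apply/cvP/setUP=> [[W /setU1P[->|WF] xW]|[xX|/cvP[W WF xW]]].
- by left.
- by right; apply: (cv_in WF).
- by exists X; rewrite ?setU11.
- by exists W; rewrite ?inE ?WF ?orbT.
Qed.
End S.

Theorem proposition4p2 (T : finType) (H : {set {set T}}) (Y : {set T}) :
  hypergraph H ->
  Y \subset carrier H ->
  dispensable H Y ->
  forall Z : {set T}, Z \subset carrier H ->
    (dispensable H Z <-> dispensable (Y |: H) Z).
Proof.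
move=> hH _ [YH [cL cLY]] Z ZH.
have carr : carrier (Y |: H) = carrier H by rewrite /carrier cv_U1; apply/setUidPr.
rewrite /dispensable carr.
set L := restr H Y :\ Y in cL cLY.
set K := restr H Z :\ Z.
set K' := restr (Y |: H) Z :\ Z.
case b : [&& Y \subset Z, Y != Z & Y \notin H]; last first.
  have -> : K' = K.
    apply/setP=> W; rewrite /K' /K /restr !inE.
    case: (eqVneq W Y) => [->|ne] /=; last by [].
    case YH': (Y \in H) => //=; rewrite andbF.
    case YZ: (Y \subset Z); rewrite ?andbF // andbT.
    by move: b; rewrite YZ YH' /= andbT => ->.
  by [].
case/and3P: b => YZ nYZ nYH.
have eK : K' = Y |: K.
  apply/setP=> W; rewrite /K' /K /restr !inE.
  case: (eqVneq W Y) => [->|ne] /=; last by [].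
  by rewrite nYZ YZ.
have nYK : Y \notin K by rewrite /K /restr !inE (negbTE nYH) !andbF.
have sLK : L \subset K.
  apply/subsetP=> W; rewrite /L /K /restr !inE => /andP[WY /andP[WH WsY]].
  rewrite WH (subset_trans WsY YZ) andbT /=.
  by rewrite andbT; apply/eqP=> e; subst W; move: nYZ; rewrite eqEsubset YZ WsY.
have YcK : Y \subset cover K by rewrite -cLY; apply: cvS.
have cK : cover K' = cover K by rewrite eK cv_U1; apply/setUidPr.
have Z0 : Z != set0.
  apply: contra nYZ => /eqP Z0; subst Z; rewrite eqEsubset YZ; exact: sub0set.
rewrite /carrier cK; split=> [[_ [cnK cKZ]]|[_ [cnK cKZ]]]; (split; [exact: ZH|split; last exact: cKZ]).
- have cK0 : cover K != set0 by rewrite cKZ.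
  apply: sep_conn; first by rewrite eK; apply/set0Pn; exists Y; rewrite setU11.
    by rewrite cK.
  by rewrite eK; apply: sep_add => //; apply: conn_sep.
- have cK0 : cover K != set0 by rewrite cKZ.
  have K0 : K != set0 by apply: contraNneq cK0 => ->; rewrite cv_set0.
  apply: sep_conn => //.
  apply: (sep_del nYK sLK cLY (conn_sep cL)).
  by rewrite -eK; apply: conn_sep.
Qed.
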